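(* Let $1<p\le2$, $\varepsilon\in(0,1]$, $\widehat\Omega\subset\mathbb{H}^n$ open and $v\in C^2(\widehat\Omega)$ with $\nabla_\varepsilon v\ne0$ in $\widehat\Omega$. If $v$ is $p$-harmonic in $\widehat\Omega$ with respect to $|\cdot|_\varepsilon$, then in $\widehat\Omega$ $$2|\nabla_\varepsilon v|_\varepsilon^2\,|\overline D^2_\varepsilon v|^2\ge\frac12\Big(1+\frac{(p-1)^2}{2n}\Big)\Big\langle\frac{\nabla_\varepsilon v}{|\nabla_\varepsilon v|_\varepsilon},\nabla_\varepsilon|\nabla_\varepsilon v|_\varepsilon^2\Big\rangle_\varepsilon^2 .$$
   Context: $\mathbb{H}^n=\mathbb{R}^{2n+1}$ with $X_i=\partial_{x_i}-\frac{y_i}2\partial_t$, $Y_i=\partial_{y_i}+\frac{x_i}2\partial_t$, $T_\varepsilon=\varepsilon\partial_t$; orthonormal frame $\{E_1,\dots,E_{2n+1}\}=\{X_1,\dots,X_n,Y_1,\dots,Y_n,T_\varepsilon\}$ of the Riemannian metric $\langle\cdot,\cdot\rangle_\varepsilon$; $\nabla_\varepsilon v=\sum_j(E_jv)E_j$; rough Hessian $\overline D^2_\varepsilon v=(E_jE_iv)_{i,j}$ with $|\overline D^2_\varepsilon v|^2=\sum_{i,j}(E_jE_iv)^2$. $p$-harmonic: $\mathrm{div}_\varepsilon(|\nabla_\varepsilon v|_\varepsilon^{p-2}\nabla_\varepsilon v)=0$ with $\mathrm{div}_\varepsilon(\sum_j\varphi_jE_j)=\sum_jE_j\varphi_j$.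 *)

(* Defs.v *)
From HB Require Import structures.
From mathcomp Require Import all_boot all_order all_algebra.
From mathcomp Require Import all_classical all_reals all_analysis.
Set Implicit Arguments. Unset Strict Implicit. Unset Printing Implicit Defensive.
Import Order.TTheory GRing.Theory Num.Theory.
Import numFieldNormedType.Exports.
Local Open Scope classical_set_scope.
Local Open Scope ring_scope.

(* H^n = R^(2n+1); a point is a row vector q with coordinates
   q_k = x_(k+1) for k < n, q_(n+k) = y_(k+1) for k < n, q_(2n) = t. *)
Definition Hpt (R : realType) (n : nat) := 'rV[R]_(n + n).+1.

Definition coord {R : realType} {n : nat} (q : Hpt R n) (k : nat) : R :=
  q ord0 (inord k).

Definition edir (R : realType) (n : nat) (k : nat) : Hpt R n :=
  delta_mx ord0 (inord k).

Definition pd {R : realType} {n : nat} (k : nat) (f : Hpt R n -> R) : Hpt R n -> R :=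
  fun q => 'D_(edir R n k) f q.

(* The orthonormal frame E_1..E_(2n+1) = X_1..X_n, Y_1..Y_n, T_eps,
   indexed here by j = 0 .. 2n. *)
Definition Efr {R : realType} {n : nat} (eps : R) (j : nat) (f : Hpt R n -> R)
  : Hpt R n -> R :=
  fun q =>
    if (j < n)%N then pd j f q - coord q (j + n) / 2 * pd (n + n) f q
    else if (j < n + n)%N then pd j f q + coord q (j - n) / 2 * pd (n + n) f q
    else eps * pd (n + n) f q.

Definition grad_eps {R : realType} {n : nat} (eps : R) (v : Hpt R n -> R) (q : Hpt R n)
  : 'rV[R]_(n + n).+1 := \row_(j < (n + n).+1) Efr eps j v q.

Definition gnorm2 {R : realType} {n : nat} (eps : R) (v : Hpt R n -> R) : Hpt R n -> R :=
  fun q => \sum_(j < (n + n).+1) (Efr eps j v q) ^+ 2.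

Definition gnorm {R : realType} {n : nat} (eps : R) (v : Hpt R n -> R) : Hpt R n -> R :=
  fun q => Num.sqrt (gnorm2 eps v q).

Definition hess2 {R : realType} {n : nat} (eps : R) (v : Hpt R n -> R) (q : Hpt R n) : R :=
  \sum_(i < (n + n).+1) \sum_(j < (n + n).+1) (Efr eps j (Efr eps i v) q) ^+ 2.

Definition C2on {R : realType} {n : nat} (Om : set (Hpt R n)) (v : Hpt R n -> R) : Prop :=
  {within Om, continuous v} /\
  (forall i, (i < (n + n).+1)%N ->
     (forall q, Om q -> derivable v q (edir R n i)) /\
     {within Om, continuous (pd i v)} /\
     (forall j, (j < (n + n).+1)%N ->
        (forall q, Om q -> derivable (pd i v) q (edir R n j)) /\
        {within Om, continuous (pd j (pd i v))})).

(* p-harmonic (classical sense, meaningful since v is C^2 and the gradient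
   does not vanish): div_eps(|grad v|^(p-2) grad v) = 0 on Omega, where
   div_eps(sum_j phi_j E_j) = sum_j E_j phi_j. *)
Definition p_harmonic {R : realType} {n : nat} (eps p : R) (Om : set (Hpt R n))
  (v : Hpt R n -> R) : Prop :=
  forall q, Om q ->
    \sum_(j < (n + n).+1)
       Efr eps j (fun z => (gnorm eps v z) `^ (p - 2) * Efr eps j v z) q = 0.

Definition dirder_gnorm2 {R : realType} {n : nat} (eps : R) (v : Hpt R n -> R)
  (q : Hpt R n) : R :=
  \sum_(j < (n + n).+1) (Efr eps j v q / gnorm eps v q) * Efr eps j (gnorm2 eps v) q.

(* Main.v *)
Require Import Defs.
From HB Require Import structures.
From mathcomp Require Import all_boot all_order all_algebra.
From mathcomp Require Import all_classical all_reals all_analysis.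
From mathcomp Require Import ring lra.
Import Order.TTheory GRing.Theory Num.Theory.
Import numFieldNormedType.Exports.
Local Open Scope classical_set_scope.
Local Open Scope ring_scope.

Section Alg.
Variables (R : realFieldType) (N : nat).
Implicit Types (X Y W Z : 'I_N -> 'I_N -> R).

Lemma sum2_lin4 X Y W Z c1 c2 c3 c4 :
  \sum_i \sum_j (c1 * X i j + c2 * Y i j + c3 * W i j + c4 * Z i j) =
  c1 * (\sum_i \sum_j X i j) + c2 * (\sum_i \sum_j Y i j) +
  c3 * (\sum_i \sum_j W i j) + c4 * (\sum_i \sum_j Z i j).
Proof.
rewrite !mulr_sumr -!big_split; apply: eq_bigr => i _ /=.
by rewrite !mulr_sumr -!big_split.
Qed.

Lemma sum_delta (g : 'I_N -> R) i : \sum_j g j * (i == j)%:R = g i.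
Proof.
rewrite (bigD1 i) //= eqxx mulr1 big1 ?addr0 // => j /negbTE.
by rewrite eq_sym => ->; rewrite mulr0.
Qed.

Lemma sum2_delta (g : 'I_N -> 'I_N -> R) : \sum_i \sum_j g i j * (i == j)%:R = \sum_i g i i.
Proof. by apply: eq_bigr => i _; rewrite sum_delta. Qed.

Lemma sum2_prod (a b : 'I_N -> R) : \sum_i \sum_j a i * b j = (\sum_i a i) * (\sum_j b j).
Proof. by rewrite mulr_suml; apply: eq_bigr => i _; rewrite mulr_sumr. Qed.

Lemma CS2 (z p : 'I_N -> 'I_N -> R) :
  0 < \sum_i \sum_j p i j ^+ 2 ->
  (\sum_i \sum_j z i j * p i j) ^+ 2 <=
  (\sum_i \sum_j z i j ^+ 2) * (\sum_i \sum_j p i j ^+ 2).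
Proof.
set Y := \sum_i \sum_j p i j ^+ 2; set f := \sum_i \sum_j z i j * p i j;
set X := \sum_i \sum_j z i j ^+ 2 => Y0.
have E : forall i j, (Y * z i j - f * p i j) ^+ 2 =
   Y ^+ 2 * z i j ^+ 2 + (- 2 * Y * f) * (z i j * p i j) + f ^+ 2 * p i j ^+ 2
   + 0 * (fun _ _ => 0) i j.
  by move=> i j /=; ring.
have H0 : 0 <= \sum_i \sum_j (Y ^+ 2 * z i j ^+ 2 + (- 2 * Y * f) * (z i j * p i j) + f ^+ 2 * p i j ^+ 2
   + 0 * (fun _ _ => 0) i j).
  by apply: sumr_ge0 => i _; apply: sumr_ge0 => j _; rewrite -E; exact: sqr_ge0.
rewrite sum2_lin4 -/X -/f -/Y in H0.
have H1 : 0 <= Y * (Y * X - f ^+ 2).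
  by apply: le_trans H0 _; rewrite le_eqVlt; apply/orP; left; apply/eqP; rewrite mul0r addr0; ring.
rewrite pmulr_rge0 // in H1.
by rewrite mulrC; lra.
Qed.

Lemma key_ineq (a : 'I_N -> R) (M : 'I_N -> 'I_N -> R) :
  (1 < N)%N -> 0 < \sum_i a i ^+ 2 ->
  ((\sum_i a i ^+ 2) * (\sum_i M i i) - \sum_i \sum_j M i j * (a i * a j)) ^+ 2 <=
  (N%:R - 1) * ((\sum_i a i ^+ 2) ^+ 2 * (\sum_i \sum_j M i j ^+ 2)
                 - (\sum_i \sum_j M i j * (a i * a j)) ^+ 2).
Proof.
set A := \sum_i a i ^+ 2; set T := \sum_i \sum_j M i j * (a i * a j);
set F := \sum_i \sum_j M i j ^+ 2; set tr := \sum_i M i i => N2 A0.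
pose z i j := A ^+ 2 * M i j - T * (a i * a j).
pose p i j := A * (i == j)%:R - a i * a j.
have Haa : \sum_i \sum_j a i ^+ 2 * a j ^+ 2 = A ^+ 2.
  by rewrite sum2_prod expr2.
have Had : \sum_i \sum_j (a i * a j) * (i == j)%:R = A.
  by rewrite sum2_delta; apply: eq_bigr => i _; rewrite expr2.
have Hd : \sum_(i < N) \sum_(j < N) (1 : R) * (i == j)%:R = N%:R.
  by rewrite sum2_delta sumr_const card_ord.
have Hmd : \sum_i \sum_j M i j * (i == j)%:R = tr by rewrite sum2_delta.
have Ezp : \sum_i \sum_j z i j * p i j = A ^+ 2 * (A * tr - T).
  have E : forall i j, z i j * p i j = A ^+ 3 * (M i j * (i == j)%:R) + (- A ^+ 2) * (M i j * (a i * a j))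
     + (- T * A) * ((a i * a j) * (i == j)%:R) + T * (a i ^+ 2 * a j ^+ 2).
    move=> i j; rewrite /z /p; case: (i == j) => /=; ring.
  under eq_bigr => i _ do under eq_bigr => j _ do rewrite E.
  rewrite sum2_lin4 Hmd -/T Had Haa; ring.
have Ep : \sum_i \sum_j p i j ^+ 2 = A ^+ 2 * (N%:R - 1).
  have E : forall i j, p i j ^+ 2 = A ^+ 2 * (1 * (i == j)%:R) + (- 2 * A) * ((a i * a j) * (i == j)%:R)
     + 1 * (a i ^+ 2 * a j ^+ 2) + 0 * (fun _ _ => 0) i j.
    move=> i j; rewrite /p; case: (i == j) => /=; ring.
  under eq_bigr => i _ do under eq_bigr => j _ do rewrite E.
  rewrite sum2_lin4 Hd Had Haa; ring.
have Ez : \sum_i \sum_j z i j ^+ 2 = A ^+ 2 * (A ^+ 2 * F - T ^+ 2).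
  have E : forall i j, z i j ^+ 2 = A ^+ 4 * M i j ^+ 2 + (- 2 * A ^+ 2 * T) * (M i j * (a i * a j))
     + T ^+ 2 * (a i ^+ 2 * a j ^+ 2) + 0 * (fun _ _ => 0) i j.
    move=> i j; rewrite /z /=; ring.
  under eq_bigr => i _ do under eq_bigr => j _ do rewrite E.
  rewrite sum2_lin4 -/F -/T Haa; ring.
have N1 : 0 < N%:R - 1 :> R by rewrite subr_gt0 ltr1n.
have A2 : 0 < A ^+ 2 by rewrite exprn_gt0.
have := CS2 z p; rewrite Ezp Ep Ez => /(_ (mulr_gt0 A2 N1)) H.
have A4 : 0 < A ^+ 4 by rewrite exprn_gt0.
rewrite -(ler_pM2l A4).
rewrite (_ : A ^+ 4 * _ = (A ^+ 2 * (A * tr - T)) ^+ 2); last by ring.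
apply: le_trans H _.
by rewrite le_eqVlt; apply/orP; left; apply/eqP; ring.
Qed.
End Alg.

Section An.
Variables (R : realType) (n : nat).
Local Notation V := (Hpt R n).

Lemma derivable_coord (m : nat) (x e : V) : derivable (fun z : V => Defs.coord z m) x e.
Proof. apply: diff_derivable; exact: differentiable_coord. Qed.

Lemma Efr_form (eps : R) (j : nat) : exists al be : V -> R,
  (forall x e, derivable al x e) /\ (forall x e, derivable be x e) /\
  forall f q, Efr eps j f q = al q * pd j f q + be q * pd (n + n) f q.
Proof.
case hj: (j < n)%N.
  exists (fun=> 1), (fun z => - (Defs.coord z (j + n) / 2)); split; first by move=> *; exact: derivable_cst.
  split; last by move=> f q; rewrite /Efr hj; move: (pd j f q) (pd (n + n) f q) (Defs.coord q _) => x y c; ring.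
  move=> x e; apply: derivableN; apply: derivableM; [exact: derivable_coord|exact: derivable_cst].
case hj2: (j < n + n)%N.
  exists (fun=> 1), (fun z => Defs.coord z (j - n) / 2); split; first by move=> *; exact: derivable_cst.
  split; last by move=> f q; rewrite /Efr hj hj2; move: (pd j f q) (pd (n + n) f q) => x y; ring.
  move=> x e; apply: derivableM; [exact: derivable_coord|exact: derivable_cst].
exists (fun=> 0), (fun=> eps); split; first by move=> *; exact: derivable_cst.
split; first by move=> *; exact: derivable_cst.
by move=> f q; rewrite /Efr hj hj2; move: (pd j f q) (pd (n + n) f q) => x y; ring.
Qed.

Lemma ringM (al be f g df1 dg1 df2 dg2 : R) : al * (f * dg1 + g * df1) + be * (f * dg2 + g * df2) = f * (al * dg1 + be * dg2) + g * (al * df1 + be * df2).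
Proof. ring. Qed.

Lemma ringC3 (al be d x y : R) : al * (d * x) + be * (d * y) = d * (al * x + be * y).
Proof. ring. Qed.

Lemma ringC4 (a b : R) : a * b + a * b = 2 * (a * b).
Proof. ring. Qed.

Definition dd (f : V -> R) (q : V) (j : nat) :=
  derivable f q (edir R n j) /\ derivable f q (edir R n (n + n)).

Lemma EfrM (eps : R) j (f g : V -> R) q : dd f q j -> dd g q j ->
  Efr eps j (fun z => f z * g z) q = f q * Efr eps j g q + g q * Efr eps j f q.
Proof.
move=> [f1 f2] [g1 g2].
have [al [be [_ [_ E]]]] := Efr_form eps j.
rewrite !E /pd.
rewrite -/(GRing.mul f g).
rewrite (deriveM f1 g1) (deriveM f2 g2).
exact: ringM.
Qed.

Lemma Efr_sum (eps : R) j m (h : 'I_m -> V -> R) q : (forall i, dd (h i) q j) ->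
  Efr eps j (fun z => \sum_(i < m) h i z) q = \sum_(i < m) Efr eps j (h i) q.
Proof.
move=> dh.
have [al [be [_ [_ E]]]] := Efr_form eps j.
rewrite E /pd.
have -> : (fun z => \sum_(i < m) h i z) = \sum_(i < m) h i.
  by apply/funext => z; rewrite fct_sumE.
rewrite !derive_sum; try by move=> i; case: (dh i).
rewrite !mulr_sumr -big_split /=; apply: eq_bigr => i _; by rewrite E.
Qed.

Lemma derive_dir (f : V -> R) x e :
  'D_e f x = 'D_1 (fun t : R => f (t *: e + x)) 0.
Proof.
rewrite /derive.
have -> : (fun h : R => h^-1 *: ((f \o shift x) (h *: e) - f x)) =
  (fun h : R => h^-1 *: (((fun t : R => f (t *: e + x)) \o shift 0) (h *: 1) - (fun t : R => f (t *: e + x)) 0)).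
  apply/funext => h /=.
  by rewrite addr0 scale0r add0r [_%:A]mulr1.
by [].
Qed.

Lemma comp_dir (h : R -> R) (f : V -> R) x e :
  derivable f x e -> derivable h (f x) 1 ->
  derivable (h \o f) x e /\ 'D_e (h \o f) x = derive1 h (f x) * 'D_e f x.
Proof.
move=> df dh.
have dg : derivable (fun t : R => f (t *: e + x)) 0 1 by apply: (derivable1P _ _ _).1.
have dh' : derivable h ((fun t : R => f (t *: e + x)) 0) 1.
  by rewrite /= scale0r add0r.
split.
  apply: (derivable1P _ _ _).2; apply/derivable1_diffP.
  apply: (@differentiable_comp _ _ _ _ (fun t : R => f (t *: e + x)) h).
    exact/derivable1_diffP.
  exact/derivable1_diffP.
rewrite !derive_dir.
rewrite -derive1E.
have -> : (fun t : R => (h \o f) (t *: e + x)) = h \o (fun t : R => f (t *: e + x)) by [].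
rewrite (derive1_comp dg dh') derive1E /= scale0r add0r.
by rewrite !derive1E.
Qed.

Lemma Efr_derivable (eps : R) (f : V -> R) q i e :
  derivable (pd i f) q e -> derivable (pd (n + n) f) q e -> derivable (Efr eps i f) q e.
Proof.
move=> d1 d2; have [al [be [dal [dbe E]]]] := Efr_form eps i.
have h1 := derivableM (dal q e) d1.
have h2 := derivableM (dbe q e) d2.
have h3 := derivableD h1 h2.
have -> : Efr eps i f = (al * pd i f) + (be * pd (n + n) f).
  by apply/funext => z; rewrite E.
exact: h3.
Qed.

Lemma Efr_comp (eps : R) j (h : R -> R) (f : V -> R) q : dd f q j -> derivable h (f q) 1 ->
  dd (h \o f) q j /\ Efr eps j (h \o f) q = derive1 h (f q) * Efr eps j f q.
Proof.
move=> [d1 d2] dh.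
have [c1 e1] := comp_dir h f q (edir R n j) d1 dh; have [c2 e2] := comp_dir h f q (edir R n (n + n)) d2 dh.
split; first by [].
have [al [be [_ [_ E]]]] := Efr_form eps j.
rewrite !E /pd e1 e2; exact: ringC3.
Qed.

Lemma EfrX2 (eps : R) j (f : V -> R) q : dd f q j ->
  dd (fun z => f z ^+ 2) q j /\ Efr eps j (fun z => f z ^+ 2) q = 2 * (f q * Efr eps j f q).
Proof.
move=> [d1 d2].
have -> : (fun z => f z ^+ 2) = fun z => f z * f z by apply/funext => z; rewrite expr2.
split; first by split; [exact: (derivableM d1 d1)|exact: (derivableM d2 d2)].
rewrite EfrM //; exact: ringC4.
Qed.

Lemma dd_sum j m (h : 'I_m -> V -> R) q : (forall i, dd (h i) q j) ->
  dd (fun z => \sum_(i < m) h i z) q j.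
Proof.
move=> dh.
have -> : (fun z => \sum_(i < m) h i z) = \sum_(i < m) h i.
  by apply/funext => z; rewrite fct_sumE.
by split; apply: derivable_sum => i; [exact: (dh i).1|exact: (dh i).2].
Qed.
End An.
Arguments derivable_coord {R n}.
Arguments Efr_form {R n}.
Arguments dd {R n}.
Arguments EfrM {R n}.
Arguments Efr_sum {R n}.
Arguments derive_dir {R n}.
Arguments comp_dir {R n}.
Arguments Efr_derivable {R n}.
Arguments Efr_comp {R n}.
Arguments EfrX2 {R n}.
Arguments dd_sum {R n}.
Arguments sum2_lin4 {R N}.
Arguments sum_delta {R N}.
Arguments sum2_delta {R N}.
Arguments sum2_prod {R N}.
Arguments CS2 {R N}.
Arguments key_ineq {R N}.

Theorem lemma6p5 (R : realType) (n : nat) (p eps : R)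
  (Om : set (Hpt R n)) (v : Hpt R n -> R) :
  (0 < n)%N -> 1 < p -> p <= 2 -> 0 < eps -> eps <= 1 ->
  open Om -> C2on Om v ->
  (forall q, Om q -> grad_eps eps v q != 0) ->
  p_harmonic eps p Om v ->
  forall q, Om q ->
    2 * gnorm2 eps v q * hess2 eps v q >=
    1 / 2 * (1 + (p - 1) ^+ 2 / (2 * n%:R)) * (dirder_gnorm2 eps v q) ^+ 2.
Proof.
move=> n0 p1 p2 e0 e1 oOm [_ C2] gr0 ph q Oq.
have dv : forall (i k : 'I_(n+n).+1), derivable (pd i v) q (edir R n k).
  by move=> i k; exact: (((C2 i (ltn_ord i)).2.2 k (ltn_ord k)).1 q Oq).
have dE : forall (i k : 'I_(n+n).+1), derivable (Efr eps i v) q (edir R n k).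
  by move=> i k; apply: Efr_derivable; [exact: dv | exact: (dv ord_max k)].
have ddE : forall (i j : 'I_(n+n).+1), dd (Efr eps i v) q j.
  by move=> i j; split; [exact: dE | exact: (dE i ord_max)].
pose a := fun i : 'I_(n+n).+1 => Efr eps i v q.
pose M := fun i j : 'I_(n+n).+1 => Efr eps j (Efr eps i v) q.
have EG : forall j : 'I_(n+n).+1, Efr eps j (gnorm2 eps v) q = \sum_i 2 * (a i * M i j).
  move=> j; rewrite /gnorm2 (Efr_sum _ _ _ (fun i z => Efr eps i v z ^+ 2)).
    by apply: eq_bigr => i _ /=; exact: (EfrX2 eps _ _ _ (ddE i j)).2.
  by move=> i; exact: (EfrX2 eps _ _ _ (ddE i j)).1.
have ddG2 : forall j : 'I_(n+n).+1, dd (gnorm2 eps v) q j.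
  by move=> j; apply: (dd_sum _ _ (fun i z => Efr eps i v z ^+ 2)) => i; exact: (EfrX2 eps _ _ _ (ddE i j)).1.
pose A := gnorm2 eps v q.
have A0 : 0 < A.
  have A0' : 0 <= A by apply: sumr_ge0 => i _; exact: sqr_ge0.
  rewrite lt_neqAle A0' andbT; apply/negP => /eqP H0.
  apply: (negP (gr0 q Oq)); apply/eqP/rowP => j; rewrite !mxE.
  have H1 : \sum_(i < (n+n).+1) (Efr eps i v q) ^+ 2 = 0 by exact: (esym H0).
  have := psumr_eq0P (P := predT) (F := fun i : 'I_(n+n).+1 => (Efr eps i v q) ^+ 2)
     (fun (i : 'I_(n+n).+1) _ => sqr_ge0 (Efr eps i v q)) H1 (i := j) isT.
  by move/eqP; rewrite sqrf_eq0 => /eqP.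
pose c := 2^-1 * (p - 2).
have EGp : (fun z => Defs.gnorm eps v z `^ (p - 2)) = (@powR R ^~ c) \o gnorm2 eps v.
  apply/funext => z; rewrite /= /Defs.gnorm -powR12_sqrt ?powRrM //.
  by apply: sumr_ge0 => i _; exact: sqr_ge0.
have hpow := @is_derive1_powR R c A A0.
have dpow : derivable (@powR R ^~ c) (gnorm2 eps v q) 1 by exact: ex_derive.
have dpowE : derive1 (@powR R ^~ c) (gnorm2 eps v q) = c * A `^ (c - 1).
  by rewrite derive1E derive_val.
have EGz : forall z, Defs.gnorm eps v z `^ (p - 2) = ((@powR R ^~ c) \o gnorm2 eps v) z.
  by move=> z; exact: (congr1 (fun f => f z) EGp).
have PHj : forall j : 'I_(n+n).+1,
  Efr eps j (fun z => Defs.gnorm eps v z `^ (p - 2) * Efr eps j v z) q =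
  A `^ c * M j j + a j * (c * A `^ (c - 1) * \sum_i 2 * (a i * M i j)).
  move=> j.
  have -> : (fun z => Defs.gnorm eps v z `^ (p - 2) * Efr eps j v z) =
            (fun z => ((@powR R ^~ c) \o gnorm2 eps v) z * Efr eps j v z).
    by apply/funext => z; rewrite EGz.
  have [ddG EfG] := Efr_comp eps j _ _ q (ddG2 j) dpow.
  rewrite (EfrM eps j _ _ q ddG (ddE j j)).
  by rewrite EfG dpowE EG.
have PH := ph q Oq.
rewrite /= in PH.
rewrite (eq_bigr _ (fun j _ => PHj j)) in PH.
pose T := \sum_i \sum_j M i j * (a i * a j).
pose tr := \sum_i M i i.
have PH2 : A `^ c * tr + (2 * (c * A `^ (c - 1))) * T = 0.
  rewrite -PH big_split /= -mulr_sumr; congr (_ + _).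
  rewrite /T exchange_big /= mulr_sumr; apply: eq_bigr => j _.
  rewrite !mulr_sumr; apply: eq_bigr => i _.
  rewrite /a /M; move: (Efr eps i v q) (Efr eps j v q) (Efr eps j (Efr eps i v) q) => x y z; ring.
have P0 : 0 < A `^ c := powR_gt0 c A0.
have EA : A `^ (c - 1) = A `^ c / A.
  rewrite powRB; first by rewrite powRr1 //; exact: ltW.
  by rewrite (gt_eqF A0) /= implybT.
have hT : A * tr + (p - 2) * T = 0.
  have : A `^ c * (A * tr + (p - 2) * T) = A * (A `^ c * tr + (2 * (c * A `^ (c - 1))) * T).
    rewrite EA /c; field; exact: lt0r_neq0.
  rewrite PH2 mulr0 => /eqP; rewrite mulf_eq0 (gt_eqF P0) /= => /eqP //.
have hD : dirder_gnorm2 eps v q = 2 * T / Num.sqrt A.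
  rewrite /dirder_gnorm2 /Defs.gnorm -/A.
  rewrite (eq_bigr (fun j : 'I_(n+n).+1 => \sum_i (2 / Num.sqrt A) * (M i j * (a i * a j)))); last first.
    move=> j _; rewrite EG mulr_sumr; apply: eq_bigr => i _.
    rewrite /a /M; move: (Efr eps i v q) (Efr eps j v q) (Efr eps j (Efr eps i v) q) => x y z; ring.
  rewrite exchange_big /= /T mulrAC mulr_sumr; apply: eq_bigr => i _.
  by rewrite mulr_sumr.
have N2 : (1 < (n + n).+1)%N by rewrite ltnS addn_gt0 n0.
pose F := hess2 eps v q.
have K : (A * tr - T) ^+ 2 <= (((n + n).+1)%:R - 1) * (A ^+ 2 * F - T ^+ 2) :=
  key_ineq a M N2 A0.
have hN : (((n + n).+1)%:R - 1 : R) = 2 * n%:R.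
  by rewrite -addn1 !natrD; ring.
rewrite hN in K.
have hAT : A * tr - T = - (p - 1) * T.
  have E2 : A * tr - T - (- (p - 1) * T) = A * tr + (p - 2) * T by ring.
  by apply/eqP; rewrite -subr_eq0 E2 hT.
rewrite hAT in K.
have nn0 : 0 < n%:R :> R by rewrite ltr0n.
have S0 : 0 < Num.sqrt A by rewrite sqrtr_gt0.
have hS : Num.sqrt A ^+ 2 = A by rewrite sqr_sqrtr // ltW.
rewrite hD -/A -/F expr_div_n hS.
rewrite (_ : 1 / 2 * (1 + (p - 1) ^+ 2 / (2 * n%:R)) * ((2 * T) ^+ 2 / A) =
   (2 * n%:R * T ^+ 2 + (p - 1) ^+ 2 * T ^+ 2) / (n%:R * A)); last first.
  by field; apply/andP; split; exact: lt0r_neq0.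
rewrite ler_pdivrMr; last exact: mulr_gt0.
nra.
Qed.
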